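(* For all integers $l\ge1$ and $n\ge2$, $$\beth(3,l,n)\le (2l-1)(n-1)(n-2).$$
   Context: Fix a totally ordered alphabet $a_1<\dots<a_l$. A word is primitive if it is not of the form $v^k$ with $k>1$. A system of type $X(t,l)$ is a finite sequence $(w_1,\dots,w_N)$ of primitive words of length $t$ over this alphabet, no two of which are cyclic shifts of each other. For $1\le i\le N$, $1\le j\le t$, let $w(i,j)$ be the cyclic shift of $w_i$ beginning with its $j$-th letter. Define a strict partial order on the pairs $(i,j)$ by $(i_1,j_1)\prec(i_2,j_2)$ iff $i_1<i_2$ and $w(i_1,j_1)$ is lexicographically smaller than $w(i_2,j_2)$. The system is $n$-light if there are no $n$ pairwise $\prec$-incomparable pairs. $\beth(t,l,n)$ denotes the largest $N$ of an $n$-light system of type $X(t,l)$. *)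

(* Defs.v *)
From mathcomp Require Import all_boot.
Set Implicit Arguments. Unset Strict Implicit. Unset Printing Implicit Defensive.

(* Alphabet a_1 < ... < a_l is 'I_l with its natural order.
   Words are sequences of letters. *)

Fixpoint lexlt (s1 s2 : seq nat) : bool :=
  match s1, s2 with
  | x :: s1', y :: s2' => (x < y) || ((x == y) && lexlt s1' s2')
  | [::], _ :: _ => true
  | _, _ => false
  end.

Definition word_lt (l : nat) (u v : seq 'I_l) : bool :=
  lexlt (map val u) (map val v).

Definition primitive (l : nat) (w : seq 'I_l) : Prop :=
  forall (v : seq 'I_l) (k : nat), 1 < k -> w <> flatten (nseq k v).

Definition cyc_shift (l : nat) (u v : seq 'I_l) : Prop :=
  exists j, j < size u /\ rot j u = v.

Definition is_system (t l : nat) (ws : seq (seq 'I_l)) : Prop :=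
  (forall i, i < size ws -> size (nth [::] ws i) = t /\ primitive (nth [::] ws i))
  /\ (forall i1 i2, i1 < size ws -> i2 < size ws -> i1 <> i2 ->
        ~ cyc_shift (nth [::] ws i1) (nth [::] ws i2)).

(* w(i,j): cyclic shift of w_i beginning with its j-th letter
   (0-based indices: i < N, j < t) *)
Definition wshift (l : nat) (ws : seq (seq 'I_l)) (i j : nat) : seq 'I_l :=
  rot j (nth [::] ws i).

Definition prec (l : nat) (ws : seq (seq 'I_l)) (p q : nat * nat) : bool :=
  (p.1 < q.1) && word_lt (wshift ws p.1 p.2) (wshift ws q.1 q.2).

Definition incomparable (l : nat) (ws : seq (seq 'I_l)) (p q : nat * nat) : bool :=
  ~~ prec ws p q && ~~ prec ws q p.

Definition n_light (t l : nat) (ws : seq (seq 'I_l)) (n : nat) : Prop :=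
  ~ exists S : seq (nat * nat),
      [/\ uniq S, size S = n,
          all (fun p => (p.1 < size ws) && (p.2 < t)) S &
          forall p q, p \in S -> q \in S -> p != q -> incomparable ws p q].

(* Main.v *)
Require Import Defs.
From mathcomp Require Import all_boot zify.
Set Implicit Arguments. Unset Strict Implicit. Unset Printing Implicit Defensive.

Lemma lexlt_irr s : lexlt s s = false.
Proof. by elim: s => //= x s ->; rewrite ltnn eqxx. Qed.

Lemma lexlt_trans a b c : lexlt a b -> lexlt b c -> lexlt a c.
Proof.
elim: a b c => [|x a IH] [|y b] [|z c] //=.
case/orP=> [hxy|/andP[/eqP <- hab]]; case/orP=> [hyz|/andP[/eqP <- hbc]].
- by rewrite (ltn_trans hxy hyz).
- by rewrite hxy.
- by rewrite hyz.
- by rewrite eqxx (IH _ _ hab hbc) orbT.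
Qed.

Lemma lexlt_asym a b : lexlt a b -> ~~ lexlt b a.
Proof. by move=> hab; apply/negP=> hba; have := lexlt_trans hab hba; rewrite lexlt_irr. Qed.

Lemma lexlt_total a b : size a = size b -> a != b -> lexlt a b || lexlt b a.
Proof.
elim: a b => [|x a IH] [|y b] //= [hs].
case: (ltngtP x y) => [//|//|<-] hne /=.
apply: IH => //; apply: contra hne => /eqP ->; by [].
Qed.

Lemma lexlt3 a b c d e f :
  lexlt [:: a; b; c] [:: d; e; f] = (a < d) || (a == d) && ((b < e) || (b == e) && (c < f)).
Proof. by rewrite /= andbF orbF. Qed.
Definition tonat (N : nat) (p : 'I_N * 'I_3) : nat * nat := (nat_of_ord p.1, nat_of_ord p.2).
Definition pw l (ws : seq (seq 'I_l)) (p : 'I_(size ws) * 'I_3) : seq nat :=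
  map val (wshift ws p.1 p.2).
Arguments pw {l} ws.

Lemma word3 l (ws : seq (seq 'I_l)) (hsys : is_system 3 ws) i : i < size ws ->
  exists x0 x1 x2 : 'I_l, nth [::] ws i = [:: x0; x1; x2] /\ ~ (x0 = x1 /\ x1 = x2).
Proof.
move=> hi; have [hs hp] := hsys.1 i hi.
move: hs hp; case: (nth [::] ws i) => [|x0 [|x1 [|x2 [|? ?]]]] //= _ hp.
exists x0, x1, x2; split => // -[e1 e2].
by apply: (hp [:: x0] 3) => //; rewrite e1 e2.
Qed.

Lemma pw_form l (ws : seq (seq 'I_l)) (hsys : is_system 3 ws) (p : 'I_(size ws) * 'I_3) :
  exists a b c : nat, pw ws p = [:: a; b; c] /\ pw ws (p.1, ordS p.2) = [:: b; c; a]
     /\ pw ws (p.1, ordS (ordS p.2)) = [:: c; a; b] /\ a < l /\ b < l /\ c < l.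
Proof.
case: p => i j.
have [x0 [x1 [x2 [hw _]]]] := word3 hsys (ltn_ord i).
rewrite /pw /wshift /= hw.
case: j => [[|[|[|j]]] hj] //=.
- exists x0, x1, x2; rewrite /ordS /= /rot /=; do !split => //.
- exists x1, x2, x0; rewrite /ordS /= /rot /=; do !split => //.
- exists x2, x0, x1; rewrite /ordS /= /rot /=; do !split => //.
Qed.

Lemma pw_inj l (ws : seq (seq 'I_l)) (hsys : is_system 3 ws) (p q : 'I_(size ws) * 'I_3) :
  pw ws p = pw ws q -> p = q.
Proof.
case: p => i j; case: q => i' j'; rewrite /pw /wshift /= => /(inj_map val_inj) e.
have [x0 [x1 [x2 [hw hn]]]] := word3 hsys (ltn_ord i).
have [y0 [y1 [y2 [hw' hn']]]] := word3 hsys (ltn_ord i').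
case: (eqVneq i i') => [ei|hne].
- subst i'; move: e; rewrite hw.
  case: j => [[|[|[|j]]] hj] //; case: j' => [[|[|[|j']]] hj'] //;
  rewrite /rot /= => e; (try (case: e; intros; subst)); subst;
  first [ by congr pair; apply: val_inj | by exfalso; apply: hn ].
- exfalso; apply: (hsys.2 i i' (ltn_ord i) (ltn_ord i')).
    by move=> ei; move: hne; rewrite (val_inj ei) eqxx.
  rewrite /cyc_shift hw hw' /=; move: e; rewrite hw hw'.
  case: j => [[|[|[|j]]] hj] //; case: j' => [[|[|[|j']]] hj'] //;
  rewrite /rot /= => e; (try (case: e; intros; subst)); subst;
  first [ by exists 0 | by exists 1 | by exists 2 ].
Qed.

Definition pprec l (ws : seq (seq 'I_l)) (p q : 'I_(size ws) * 'I_3) := prec ws (tonat p) (tonat q).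
Arguments pprec {l} ws.
Definition pinc l (ws : seq (seq 'I_l)) (p q : 'I_(size ws) * 'I_3) := ~~ pprec ws p q && ~~ pprec ws q p.
Arguments pinc {l} ws.
Definition plt l (ws : seq (seq 'I_l)) (p q : 'I_(size ws) * 'I_3) := lexlt (pw ws p) (pw ws q).
Arguments plt {l} ws.

Lemma pprecE l (ws : seq (seq 'I_l)) p q : pprec ws p q = (p.1 < q.1) && plt ws p q.
Proof. by []. Qed.

Lemma size_pw l (ws : seq (seq 'I_l)) (hsys : is_system 3 ws) p : size (pw ws p) = 3.
Proof. by have [a [b [c [-> _]]]] := pw_form hsys p. Qed.

Lemma plt_total l (ws : seq (seq 'I_l)) (hsys : is_system 3 ws) (p q : 'I_(size ws) * 'I_3) :
  p != q -> plt ws p q || plt ws q p.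
Proof.
move=> hne; apply: lexlt_total; first by rewrite !size_pw.
by apply: contra hne => /eqP /(pw_inj hsys) ->.
Qed.

Definition good l (ws : seq (seq 'I_l)) (p : 'I_(size ws) * 'I_3) (S : {set 'I_(size ws) * 'I_3}) :=
  [&& p \in S, [forall q in S, [forall r in S, (q != r) ==> pinc ws q r]]
   & [forall q in S, (q.1 <= p.1) && ~~ plt ws q p]].
Arguments good {l} ws.

Definition hh l (ws : seq (seq 'I_l)) (p : 'I_(size ws) * 'I_3) :=
  \max_(S | good ws p S) #|S|.
Arguments hh {l} ws.

Lemma good1 l (ws : seq (seq 'I_l)) p : good ws p [set p].
Proof.
apply/and3P; split; first by rewrite set11.
- by apply/forall_inP => q /set1P -> ; apply/forall_inP => r /set1P ->; rewrite eqxx.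
- by apply/forall_inP => q /set1P ->; rewrite leqnn /plt lexlt_irr.
Qed.

Lemma hh_ex l (ws : seq (seq 'I_l)) p : exists S, good ws p S /\ hh ws p = #|S|.
Proof.
have h0 : 0 < #|[pred S | good ws p S]|.
  by apply/card_gt0P; exists [set p]; rewrite inE good1.
have [S hS e] := eq_bigmax_cond (fun S : {set 'I_(size ws) * 'I_3} => #|S|) h0.
by exists S; split => //; rewrite /hh -e.
Qed.

Lemma hh_lt l (ws : seq (seq 'I_l)) (hsys : is_system 3 ws) (p q : 'I_(size ws) * 'I_3) :
  q.1 <= p.1 -> plt ws p q -> hh ws q < hh ws p.
Proof.
move=> hqp hpq; have [S [/and3P[hqS hanti hdom] ->]] := hh_ex q.
have hpr : forall r, r \in S -> plt ws p r /\ r.1 <= p.1.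
  move=> r hr; have /andP[hrq hnrq] := forall_inP hdom r hr.
  split; last exact: leq_trans hrq hqp.
  case: (eqVneq r q) => [->//|hne].
  have := plt_total hsys hne; rewrite (negbTE hnrq) /= => hqr.
  exact: lexlt_trans hpq hqr.
have hpS : p \notin S by apply/negP => /hpr [] ; rewrite /plt lexlt_irr.
have hg : good ws p (p |: S).
  apply/and3P; split; first by rewrite setU11.
  - apply/forall_inP => x /setU1P hx; apply/forall_inP => y /setU1P hy.
    apply/implyP => hxy.
    case: hx => [ex|hx]; case: hy => [ey|hy].
    + by move: hxy; rewrite ex ey eqxx.
    + subst x; have [h1 h2] := hpr y hy.
      by rewrite /pinc !pprecE /plt (negbTE (lexlt_asym h1)) andbF /= ltnNge h2.
    + subst y; have [h1 h2] := hpr x hx.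
      by rewrite /pinc !pprecE /plt (negbTE (lexlt_asym h1)) andbF /= ltnNge h2.
    + by have := forall_inP (forall_inP hanti x hx) y hy; rewrite hxy.
  - apply/forall_inP => x /setU1P [->|hx]; first by rewrite leqnn /plt lexlt_irr.
    by have [h1 h2] := hpr x hx; rewrite h2 /plt (lexlt_asym h1).
have := @leq_bigmax_cond _ (good ws p) (fun S => #|S|) _ hg; rewrite -/(hh ws p) cardsU1 hpS.
by [].
Qed.

Lemma hh_lt_n l (ws : seq (seq 'I_l)) n (hlight : n_light 3 ws n) (p : 'I_(size ws) * 'I_3) :
  hh ws p < n.
Proof.
have [S [/and3P[hpS hanti hdom] ->]] := hh_ex p.
rewrite ltnNge; apply/negP => hn; apply: hlight.
exists (map (@tonat _) (take n (enum S))); split.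
- rewrite map_inj_uniq ?take_uniq ?enum_uniq //.
  by move=> [a b] [c d] /= [/val_inj -> /val_inj ->].
- by rewrite size_map size_takel // -cardE.
- by apply/allP => x /mapP [q _ ->] /=; rewrite !ltn_ord.
- move=> x y /mapP [a ha ->] /mapP [b hb ->] hxy.
  have haS : a \in S by move: (mem_take ha); rewrite mem_enum.
  have hbS : b \in S by move: (mem_take hb); rewrite mem_enum.
  have hab : a != b by apply: contra hxy => /eqP ->.
  by have := forall_inP (forall_inP hanti a haS) b hbS; rewrite hab.
Qed.

Lemma chain_lt l (ws : seq (seq 'I_l)) (hsys : is_system 3 ws) (p q : 'I_(size ws) * 'I_3) :
  hh ws p = hh ws q -> plt ws p q -> p.1 < q.1.
Proof.
move=> e hpq; rewrite ltnNge; apply/negP => hqp.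
by have := hh_lt hsys hqp hpq; rewrite e ltnn.
Qed.

Lemma chain_mono l (ws : seq (seq 'I_l)) (hsys : is_system 3 ws) (p q : 'I_(size ws) * 'I_3) :
  hh ws p = hh ws q -> p.1 < q.1 -> plt ws p q.
Proof.
move=> e hpq; have hne : p != q by apply/negP => /eqP e'; move: hpq; rewrite e' ltnn.
have /orP[//|hqp] := plt_total hsys hne.
by have := chain_lt hsys (esym e) hqp; rewrite ltnNge ltnW.
Qed.

Definition VV l (ws : seq (seq 'I_l)) (p : 'I_(size ws) * 'I_3) : nat :=
  head 0 (pw ws p) + head 0 (pw ws (p.1, ordS p.2)).
Arguments VV {l} ws.

Lemma step l (ws : seq (seq 'I_l)) (hsys : is_system 3 ws) (p q : 'I_(size ws) * 'I_3) :
  q.1 < p.1 -> hh ws q = hh ws p -> hh ws (q.1, ordS q.2) = hh ws (p.1, ordS p.2) ->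
  VV ws p <= VV ws q ->
  exists a b c c', [/\ pw ws p = [:: a; b; c], pw ws (p.1, ordS p.2) = [:: b; c; a],
     pw ws q = [:: a; b; c'], pw ws (q.1, ordS q.2) = [:: b; c'; a] & c' < c].
Proof.
move=> hqp e1 e2 hv.
have h1 := chain_mono hsys e1 hqp.
have h2 := chain_mono hsys e2 hqp.
have [a [b [c [ep [eps _]]]]] := pw_form hsys p.
have [a' [b' [c' [eq [eqs _]]]]] := pw_form hsys q.
move: h1 h2 hv; rewrite /plt /VV ep eps eq eqs !lexlt3 /=.
move=> h1 h2 hv.
have ha : a' <= a by case/orP: h1 => [/ltnW //|/andP[/eqP -> _]].
have hb : b' <= b by case/orP: h2 => [/ltnW //|/andP[/eqP -> _]].
have ea : a' = a by lia.
have eb : b' = b by lia.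
subst a' b'; exists a, b, c, c'; split => //.
by move: h1; rewrite ltnn eqxx ltnn eqxx /=.
Qed.

Definition goodj l (ws : seq (seq 'I_l)) (i : 'I_(size ws)) (j : 'I_3) : bool :=
  [forall i' : 'I_(size ws), forall j' : 'I_3,
     [&& i' < i, hh ws (i', j') == hh ws (i, j) & hh ws (i', ordS j') == hh ws (i, ordS j)]
       ==> (VV ws (i', j') < VV ws (i, j))].
Arguments goodj {l} ws.

Lemma exists_goodj l (ws : seq (seq 'I_l)) (hsys : is_system 3 ws) (i : 'I_(size ws)) :
  exists j, goodj ws i j.
Proof.
pose j0 : 'I_3 := ord0.
have bad : forall j, ~~ goodj ws i j -> exists q : 'I_(size ws) * 'I_3,
    [/\ q.1 < i, hh ws q = hh ws (i, j), hh ws (q.1, ordS q.2) = hh ws (i, ordS j)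
      & VV ws (i, j) <= VV ws q].
  move=> j /forallPn [i' /forallPn [j' h]]; rewrite negb_imply -leqNgt in h.
  case/andP: h => /and3P [h1 /eqP h2 /eqP h3] h4.
  by exists (i', j').
case: (boolP [exists j, goodj ws i j]) => [/existsP //|/existsPn hn].
exfalso.
have [q0 [a0 b0 c0 d0]] := bad _ (hn j0).
have [q1 [a1 b1 c1 d1]] := bad _ (hn (ordS j0)).
have [q2 [a2 b2 c2 d2]] := bad _ (hn (ordS (ordS j0))).
have e3 : ordS (ordS (ordS j0)) = j0 by apply: val_inj.
have [x [y [z [c [s00 s01 s02 s03 s04]]]]] := step hsys (p := (i, j0)) a0 b0 c0 d0.
have [x' [y' [z' [c' [s10 s11 s12 s13 s14]]]]] := step hsys (p := (i, ordS j0)) a1 b1 c1 d1.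
have [x'' [y'' [z'' [c'' [s20 s21 s22 s23 s24]]]]] := step hsys (p := (i, ordS (ordS j0))) a2 b2 c2 d2.
rewrite e3 in c2.
have [u [v [w [f0 [f1 [f2 _]]]]]] := pw_form hsys (i, j0).
move: s00 s01 s10 s11 s20 s21; rewrite /= e3 f0 f1 f2.
move=> e00 _ e10 _ e20 _.
case: e00 => ??? ; case: e10 => ???; case: e20 => ???; subst.
have t0 : q2.1 < q0.1.
  apply: (chain_lt hsys (p := (q2.1, ordS q2.2)) (q := q0)).
    by rewrite c2 b0.
  by rewrite /plt s23 s02 lexlt3 ltnn eqxx s24.
have t1 : q0.1 < q1.1.
  apply: (chain_lt hsys (p := (q0.1, ordS q0.2)) (q := q1)).
    by rewrite c0 b1.
  by rewrite /plt s03 s12 lexlt3 ltnn eqxx s04.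
have t2 : q1.1 < q2.1.
  apply: (chain_lt hsys (p := (q1.1, ordS q1.2)) (q := q2)).
    by rewrite c1 b2.
  by rewrite /plt s13 s22 lexlt3 ltnn eqxx s14.
by have := ltn_trans t0 (ltn_trans t1 t2); rewrite ltnn.
Qed.

Definition jj l (ws : seq (seq 'I_l)) (i : 'I_(size ws)) : 'I_3 :=
  odflt ord0 [pick j | goodj ws i j].
Arguments jj {l} ws.

Lemma jj_good l (ws : seq (seq 'I_l)) (hsys : is_system 3 ws) (i : 'I_(size ws)) :
  goodj ws i (jj ws i).
Proof.
rewrite /jj; case: pickP => [j hj //|h] /=.
by have [j hj] := exists_goodj hsys i; move: (h j); rewrite hj.
Qed.

Lemma hh_pos l (ws : seq (seq 'I_l)) (p : 'I_(size ws) * 'I_3) : 0 < hh ws p.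
Proof.
have := @leq_bigmax_cond _ (good ws p) (fun S => #|S|) _ (good1 p).
by rewrite cards1.
Qed.

Lemma hh_neq l (ws : seq (seq 'I_l)) (hsys : is_system 3 ws) (i : 'I_(size ws)) (j : 'I_3) :
  hh ws (i, j) != hh ws (i, ordS j).
Proof.
apply/negP => /eqP e.
have hne : (i, j) != (i, ordS j).
  by case: j e => [[|[|[|j]]] hj] //= _; apply/negP => /eqP [].
case/orP: (plt_total hsys hne) => h.
- by have := chain_lt hsys e h; rewrite ltnn.
- by have := chain_lt hsys (esym e) h; rewrite ltnn.
Qed.

Lemma VV_lt l (ws : seq (seq 'I_l)) (hsys : is_system 3 ws) (p : 'I_(size ws) * 'I_3) :
  VV ws p < 2 * l - 1.
Proof.
have [a [b [c [e1 [e2 [_ [ha [hb hc]]]]]]]] := pw_form hsys p.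
rewrite /VV e1 e2 /=; lia.
Qed.

Definition code l (ws : seq (seq 'I_l)) (n : nat) (i : 'I_(size ws)) : nat :=
  let a := (hh ws (i, jj ws i)).-1 in
  let b := (hh ws (i, ordS (jj ws i))).-1 in
  let b' := if b < a then b else b.-1 in
  (a * (n - 2) + b') * (2 * l - 1) + VV ws (i, jj ws i).
Arguments code {l} ws.

Lemma code_lt l (ws : seq (seq 'I_l)) (hsys : is_system 3 ws) n (hlight : n_light 3 ws n)
  (i : 'I_(size ws)) : code ws n i < (n - 1) * (n - 2) * (2 * l - 1).
Proof.
rewrite /code.
set A := hh ws (i, jj ws i); set B := hh ws (i, ordS (jj ws i)).
set v := VV ws (i, jj ws i).
have hA1 : 0 < A := hh_pos _. have hB1 : 0 < B := hh_pos _.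
have hAn : A < n := hh_lt_n hlight _. have hBn : B < n := hh_lt_n hlight _.
have hAB : A != B := hh_neq hsys i (jj ws i).
have hv : v < 2 * l - 1 := VV_lt hsys _.
set b' := if B.-1 < A.-1 then B.-1 else B.-1.-1.
have hb' : b' < n - 2 by rewrite /b'; case: (ltnP B.-1 A.-1) => hc /=; move/eqP: hAB => hAB; lia.
have ha : A.-1 <= n - 2 by lia.
have hX : (A.-1 * (n - 2) + b').+1 <= (n - 1) * (n - 2).
  have : A.-1 * (n - 2) <= (n - 2) * (n - 2) by rewrite leq_mul2r ha orbT.
  have -> : (n - 1) * (n - 2) = (n - 2) * (n - 2) + (n - 2).
    by rewrite -mulSnr; congr (_ * _); lia.
  lia.
apply: (@leq_trans ((A.-1 * (n - 2) + b').+1 * (2 * l - 1))).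
  by rewrite mulSn; lia.
by rewrite leq_mul2r hX orbT.
Qed.

Lemma decode2 x1 x2 v1 v2 K : v1 < K -> v2 < K -> x1 * K + v1 = x2 * K + v2 -> x1 = x2 /\ v1 = v2.
Proof.
move=> h1 h2 e.
have K0 : 0 < K by lia.
have ev : v1 = v2 by move: (congr1 (modn^~ K) e); rewrite !modnMDl !modn_small.
split => //; move: (congr1 (divn^~ K) e); rewrite !divnMDl // !divn_small //; lia.
Qed.

Lemma code_inj l (ws : seq (seq 'I_l)) (hsys : is_system 3 ws) n (hlight : n_light 3 ws n)
  (i1 i2 : 'I_(size ws)) : code ws n i1 = code ws n i2 -> i1 = i2.
Proof.
rewrite /code.
set A1 := hh ws (i1, jj ws i1); set B1 := hh ws (i1, ordS (jj ws i1)).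
set A2 := hh ws (i2, jj ws i2); set B2 := hh ws (i2, ordS (jj ws i2)).
have hA1 : 0 < A1 := hh_pos _. have hB1 : 0 < B1 := hh_pos _.
have hA2 : 0 < A2 := hh_pos _. have hB2 : 0 < B2 := hh_pos _.
have hA1n : A1 < n := hh_lt_n hlight _. have hB1n : B1 < n := hh_lt_n hlight _.
have hA2n : A2 < n := hh_lt_n hlight _. have hB2n : B2 < n := hh_lt_n hlight _.
have /eqP hAB1 : A1 != B1 := hh_neq hsys i1 (jj ws i1).
have /eqP hAB2 : A2 != B2 := hh_neq hsys i2 (jj ws i2).
have hv1 := VV_lt hsys (i1, jj ws i1). have hv2 := VV_lt hsys (i2, jj ws i2).
move=> /decode2 [] // eX ev.
have [] := decode2 _ _ eX.
- by case: (ltnP B1.-1 A1.-1) => /=; lia.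
- by case: (ltnP B2.-1 A2.-1) => /=; lia.
move=> eA eb.
have eA' : A1 = A2 by lia.
have eB' : B1 = B2.
  by move: eb; case: (ltnP B1.-1 A1.-1); case: (ltnP B2.-1 A2.-1); lia.
have key : forall (p q : 'I_(size ws)), p < q -> hh ws (p, jj ws p) = hh ws (q, jj ws q) ->
    hh ws (p, ordS (jj ws p)) = hh ws (q, ordS (jj ws q)) ->
    VV ws (p, jj ws p) = VV ws (q, jj ws q) -> False.
  move=> p q hpq e1 e2 e3.
  have := forallP (forallP (jj_good hsys q) p) (jj ws p).
  by rewrite hpq e1 e2 !eqxx e3 ltnn.
case: (ltngtP i1 i2) => [h|h|h]; last by apply: val_inj.
- by exfalso; apply: (key i1 i2 h).
- by exfalso; apply: (key i2 i1 h).
Qed.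

Theorem mainTheorem17 (l n : nat) (hl : 1 <= l) (hn : 2 <= n)
  (ws : seq (seq 'I_l)) (hsys : is_system 3 ws) (hlight : n_light 3 ws n) :
  size ws <= (2 * l - 1) * (n - 1) * (n - 2).
Proof.
have -> : (2 * l - 1) * (n - 1) * (n - 2) = (n - 1) * (n - 2) * (2 * l - 1).
  by rewrite [RHS]mulnC mulnA.
rewrite -(size_enum_ord (size ws)) -(size_map (code ws n)) -(size_iota 0 ((n - 1) * (n - 2) * (2 * l - 1))).
apply: uniq_leq_size.
  rewrite map_inj_uniq ?enum_uniq //.
  by move=> x y; apply: code_inj.
move=> x /mapP [i _ ->]; rewrite mem_iota add0n /=.
exact: code_lt.
Qed.
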